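(* The construction sending each homogeneous and finitely generated operad $\mathcal{O}$ to its prefix poset $(\mathcal{O}_\bullet,\preceq)$ and each operad morphism $\psi:\mathcal{O}\to\mathcal{O}'$ between homogeneous and finitely generated operads to the same underlying map $\mathcal{O}_\bullet\to\mathcal{O}'_\bullet$ is a functor from the category of homogeneous and finitely generated operads to the category of posets (in particular every such $\psi$ is order-preserving: $x\preceq y$ implies $\psi(x)\preceq\psi(y)$), and this functor preserves injections and surjections.
   Context: Operads are nonsymmetric set-operads: a graded set $\mathcal{O}=\bigsqcup_{n}\mathcal{O}(n)$ (elements of $\mathcal{O}(n)$ have arity $n$) with partial compositions $\circ_i:\mathcal{O}(n)\times\mathcal{O}(m)\to\mathcal{O}(n+m-1)$, $i\in[n]$, and a unit $\mathbf{1}\in\mathcal{O}(1)$, satisfying the usual associativity, commutativity and unit axioms; operad morphisms preserve arity, unit and partial compositions. If $\mathcal{O}(0)=\emptyset$ and $\mathcal{O}(1)=\{\mathbf{1}\}$, $\mathcal{O}$ has a unique minimal (for inclusion) generating set $\mathfrak{G}_\mathcal{O}$. A treelike expression of $x\in\mathcal{O}$ is a planar rooted tree with internal nodes of arity $k$ decorated by elements of $\mathfrak{G}_\mathcal{O}$ of arity $k$ which evaluates to $x$ when the nodes are composed in $\mathcal{O}$. $\mathcal{O}$ is homogeneous if $\mathcal{O}(0)=\emptyset$, $\mathcal{O}(1)=\{\mathbf{1}\}$ and any two treelike expressions of the same element have the same number of internal nodes; this number is the degree of the element, and $\mathcal{O}_\bullet$ denotes $\mathcal{O}$ graded by degree.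 $\mathcal{O}$ is finitely generated if $\mathfrak{G}_\mathcal{O}$ is finite. The prefix poset of $\mathcal{O}$ is $(\mathcal{O}_\bullet,\preceq)$ where $x\preceq y$ iff $y=(\cdots((x\circ_{i_1}\mathtt{a}_1)\circ_{i_2}\mathtt{a}_2)\cdots)\circ_{i_k}\mathtt{a}_k$ for some $k\ge0$, $\mathtt{a}_1,\dots,\mathtt{a}_k\in\mathfrak{G}_\mathcal{O}$ and positive integers $i_1,\dots,i_k$. *)

(* Defs.v *)
From Stdlib Require Import Arith List.
Import ListNotations.
Set Implicit Arguments.

(* A nonsymmetric set-operad, with partial compositions indexed 1-based.
   [pcomp x i y] is x o_i y; it is only meaningful (and the axioms only
   constrain it) when 1 <= i <= ar x; outside that range its value is junk. *)
Record operad := Operad {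
  carrier :> Type;
  ar : carrier -> nat;
  pcomp : carrier -> nat -> carrier -> carrier;
  unit_el : carrier;
  ar_unit : ar unit_el = 1;
  ar_pcomp : forall x y i, 1 <= i <= ar x ->
      ar (pcomp x i y) = ar x + ar y - 1;
  pcomp_unit_l : forall x, pcomp unit_el 1 x = x;
  pcomp_unit_r : forall x i, 1 <= i <= ar x -> pcomp x i unit_el = x;
  pcomp_assoc : forall x y z i j, 1 <= i <= ar x -> 1 <= j <= ar y ->
      pcomp (pcomp x i y) (i + j - 1) z = pcomp x i (pcomp y j z);
  pcomp_comm : forall x y z i j, 1 <= i -> i < j -> j <= ar x ->
      pcomp (pcomp x i y) (j + ar y - 1) z = pcomp (pcomp x j z) i y
}.

Definition is_morphism {O O' : operad} (f : O -> O') : Prop :=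
  (forall x, ar O' (f x) = ar O x) /\
  f (unit_el O) = unit_el O' /\
  (forall x i y, 1 <= i <= ar O x ->
      f (pcomp O x i y) = pcomp O' (f x) i (f y)).

Section Trees.
Variable O : operad.

Inductive tree : Type :=
| Leaf : tree
| Node : O -> forest -> tree
with forest : Type :=
| FNil : forest
| FCons : tree -> forest -> forest.

Fixpoint fsize (f : forest) : nat :=
  match f with FNil => 0 | FCons _ f' => S (fsize f') end.

Fixpoint valid (G : O -> Prop) (t : tree) : Prop :=
  match t with
  | Leaf => True
  | Node a f => G a /\ fsize f = ar O a /\ fvalid G f
  end
with fvalid (G : O -> Prop) (f : forest) : Prop :=
  match f with
  | FNil => True
  | FCons t f' => valid G t /\ fvalid G f'
  end.

Fixpoint nodes (t : tree) : nat :=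
  match t with Leaf => 0 | Node _ f => S (fnodes f) end
with fnodes (f : forest) : nat :=
  match f with FNil => 0 | FCons t f' => nodes t + fnodes f' end.

(* Full composition a o (v_1, ..., v_k), computed as
   ( ... ((a o_k v_k) o_(k-1) v_(k-1)) ... ) o_1 v_1. *)
Fixpoint fullcomp_from (a : O) (i : nat) (vs : list O) : O :=
  match vs with
  | [] => a
  | v :: vs' => pcomp O (fullcomp_from a (S i) vs') i v
  end.

Definition fullcomp (a : O) (vs : list O) : O := fullcomp_from a 1 vs.

Fixpoint eval (t : tree) : O :=
  match t with
  | Leaf => unit_el O
  | Node a f => fullcomp a (feval f)
  end
with feval (f : forest) : list O :=
  match f with
  | FNil => []
  | FCons t f' => eval t :: feval f'
  end.

Definition treelike (G : O -> Prop) (t : tree) (x : O) : Prop :=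
  valid G t /\ eval t = x.

Definition generates (G : O -> Prop) : Prop :=
  forall x : O, exists t, treelike G t x.

Definition minimal_generating (G : O -> Prop) : Prop :=
  generates G /\
  forall G' : O -> Prop, (forall x, G' x -> G x) -> generates G' ->
    forall x, G x -> G' x.

Definition reduced : Prop :=
  (forall x : O, ar O x <> 0) /\ (forall x : O, ar O x = 1 -> x = unit_el O).

Definition homogeneous (G : O -> Prop) : Prop :=
  reduced /\
  forall (x : O) t t', treelike G t x -> treelike G t' x -> nodes t = nodes t'.

Definition finite_set (G : O -> Prop) : Prop :=
  exists s : list O, forall x, G x -> In x s.

Inductive prefix (G : O -> Prop) : O -> O -> Prop :=
| prefix_refl : forall x, prefix G x x
| prefix_step : forall x y i a, prefix G x y -> G a -> 1 <= i <= ar O y ->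
    prefix G x (pcomp O y i a).

End Trees.

Arguments valid {O}. Arguments fvalid {O}. Arguments nodes {O}. Arguments eval {O}.
Arguments treelike {O}. Arguments generates {O}. Arguments minimal_generating {O}.
Arguments reduced {O}. Arguments homogeneous {O}. Arguments finite_set {O}.
Arguments prefix {O}. Arguments Leaf {O}. Arguments FNil {O}.

Definition partial_order (T : Type) (R : T -> T -> Prop) : Prop :=
  (forall x, R x x) /\
  (forall x y z, R x y -> R y z -> R x z) /\
  (forall x y, R x y -> R y x -> x = y).

(* Main.v *)
Require Import Defs.
From Stdlib Require Import Arith List Lia.
Import ListNotations.

Scheme tree_ind2 := Induction for tree Sort Prop
  with forest_ind2 := Induction for forest Sort Prop.

Lemma feval_len (O : operad) (f : forest O) : length (feval f) = fsize f.
Proof. induction f; simpl; auto. Qed.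

Lemma ar_fc (O : operad) (Hred : reduced (O:=O)) :
  forall vs g s, 1 <= s -> s + length vs - 1 <= ar O g ->
  ar O (fullcomp_from O g s vs) >= ar O g.
Proof.
  induction vs as [|v vs IH]; intros g s Hs Hl; simpl in *; [lia|].
  assert (H1 := IH g (S s) ltac:(lia) ltac:(lia)).
  rewrite ar_pcomp by lia.
  destruct Hred as [H0 _]. specialize (H0 v). lia.
Qed.

Lemma graft (O : operad) (G : O -> Prop) (Hred : reduced (O:=O)) :
  forall t, valid G t -> forall x y i, prefix G x y -> 1 <= i <= ar O y ->
  prefix G x (pcomp O y i (eval t)).
Proof.
  intro t.
  apply (tree_ind2 O
    (fun t => valid G t -> forall x y i, prefix G x y -> 1 <= i <= ar O y ->
       prefix G x (pcomp O y i (eval t)))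
    (fun f => forall g s, G g -> 1 <= s -> s + fsize f - 1 <= ar O g ->
       fvalid G f -> forall x y i, prefix G x y -> 1 <= i <= ar O y ->
       prefix G x (pcomp O y i (fullcomp_from O g s (feval f))))).
  - intros _ x y i Hp Hi. simpl. rewrite pcomp_unit_r by lia. exact Hp.
  - intros g f IHf [Hg [Hs Hv]] x y i Hp Hi. simpl. unfold fullcomp.
    apply IHf; auto; lia.
  - intros g s Hg Hs Hl _ x y i Hp Hi. simpl. apply prefix_step; auto.
  - intros t0 IHt f IHf g s Hg Hs Hl [Hvt Hvf] x y i Hp Hi. simpl.
    simpl in Hl.
    assert (HF := ar_fc O Hred (feval f) g (S s) ltac:(lia)
                    ltac:(rewrite feval_len; lia)).
    rewrite <- pcomp_assoc by lia.
    apply IHt; auto.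
    + apply IHf; auto; lia.
    + rewrite ar_pcomp by lia. lia.
Qed.

Theorem theorem4p6 :
  (* object part: the prefix poset of a homogeneous finitely generated operad *)
  (forall (O : operad) (G : O -> Prop),
     minimal_generating G -> homogeneous G -> finite_set G ->
     partial_order (prefix G)) /\
  (* morphism part: every operad morphism is order-preserving *)
  (forall (O O' : operad) (G : O -> Prop) (G' : O' -> Prop) (psi : O -> O'),
     minimal_generating G -> homogeneous G -> finite_set G ->
     minimal_generating G' -> homogeneous G' -> finite_set G' ->
     is_morphism psi ->
     forall x y : O, prefix G x y -> prefix G' (psi x) (psi y)).
Proof.
  split.
  - intros O G Hmin [Hred Hhom] _.
    assert (Hgen2 : forall a, G a -> 2 <= ar O a).
    { intros a Ha. destruct Hred as [H0 H1].
      destruct (ar O a) as [|[|n]] eqn:E.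
      - exact (False_ind _ (H0 a E)).
      - exfalso. apply H1 in E. subst a.
        assert (T1 : treelike G (Leaf) (unit_el O)) by (split; simpl; auto).
        assert (T2 : treelike G (Node (unit_el O) (FCons Leaf FNil)) (unit_el O)).
        { split; simpl.
          - split; auto. split; auto. rewrite ar_unit. reflexivity.
          - unfold fullcomp. simpl. apply pcomp_unit_l. }
        specialize (Hhom _ _ _ T1 T2). simpl in Hhom. discriminate.
      - lia. }
    assert (Hgrow : forall x y, prefix G x y -> x = y \/ ar O x < ar O y).
    { intros x y Hp. induction Hp as [x|x y i a Hp IH Ha Hi].
      - left; auto.
      - right. rewrite ar_pcomp by lia. specialize (Hgen2 a Ha).
        destruct IH as [<-|IH]; lia. }
    split; [|split].
    + intro x. apply prefix_refl.
    + intros x y z Hxy Hyz. induction Hyz.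
      * exact Hxy.
      * apply prefix_step; auto.
    + intros x y H1 H2. destruct (Hgrow _ _ H1) as [|A]; auto.
      destruct (Hgrow _ _ H2) as [<-|B]; [reflexivity|lia].
  - intros O O' G G' psi _ _ _ [Hgen' _] [Hred' _] _ [Har [Hu Hc]] x y Hp.
    induction Hp as [x|x y i a Hp IH Ha Hi].
    + apply prefix_refl.
    + rewrite Hc by exact Hi.
      destruct (Hgen' (psi a)) as [t [Hv He]].
      rewrite <- He. apply graft; auto. rewrite Har. exact Hi.
Qed.
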